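(* Let $a\in\mathbb{C}$ and $b=0$, and suppose $\cdot_\lambda\cdot$ is a compatible left-symmetric conformal algebraic structure on $\mathcal{W}(a,0)=\mathbb{C}[\partial]L\oplus\mathbb{C}[\partial]W$ such that $\mathbb{C}[\partial]L$ is a left-symmetric conformal subalgebra. Let $c\in\mathbb{C}$ with $L_\lambda L=(\partial+\lambda+c)L$, and write $L_\lambda W=g_1L+g_2W$, $W_\lambda L=h_1L+h_2W$, $W_\lambda W=k_1L+k_2W$ with $g_i,h_i,k_i\in\mathbb{C}[\lambda,\partial]$. Assume $g_2(\lambda,\partial)=\partial+(a-1)\lambda+c$ and $h_2(\lambda,\partial)=\partial+\lambda+c$. Then one of the following holds: (C2) $h_1=g_1=k_1=k_2=0$; (C3) $a=1$ (so $g_2=\partial+c$), $h_1=g_1=k_1=0$, and $k_2$ is a nonzero constant.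
   Context: A conformal algebra is a $\mathbb{C}[\partial]$-module $R$ with a $\mathbb{C}$-bilinear map $R\times R\to R[\lambda]$, $(x,y)\mapsto x_\lambda y$, satisfying $(\partial x)_\lambda y=-\lambda\, x_\lambda y$ and $x_\lambda(\partial y)=(\partial+\lambda)\,x_\lambda y$. For $x,y\in R$, $y_{-\lambda-\partial}x$ means: write $y_\mu x=\sum_j \mu^j z_j$ and set $y_{-\lambda-\partial}x=\sum_j(-\lambda-\partial)^j z_j$. A left-symmetric conformal algebra is a conformal algebra with $(x_\lambda y)_{\lambda+\mu}z-x_\lambda(y_\mu z)=(y_\mu x)_{\lambda+\mu}z-y_\mu(x_\lambda z)$. A compatible left-symmetric conformal algebraic structure on a Lie conformal algebra $(R,[\cdot_\lambda\cdot])$ is a left-symmetric conformal product on the same $\mathbb{C}[\partial]$-module with $x_\lambda y-y_{-\lambda-\partial}x=[x_\lambda y]$ for all $x,y$. $\mathcal{W}(a,b)$ is the free $\mathbb{C}[\partial]$-module with basis $L,W$ and Lie conformal brackets $[L_\lambda L]=(\partial+2\lambda)L$, $[L_\lambda W]=(\partial+a\lambda+b)W$, $[W_\lambda W]=0$. ''$\mathbb{C}[\partial]L$ is a left-symmetric conformal subalgebra'' means $L_\lambda L\in(\mathbb{C}[\partial]L)[\lambda]$; in that case $L_\lambda L=(\partial+\lambda+c)L$ for some $c\in\mathbb{C}$. *)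

(* Defs.v *)
From HB Require Import structures.
From mathcomp Require Import all_boot all_order all_algebra.
From mathcomp Require Import mpoly.
From mathcomp Require Import complex.
From mathcomp Require Import reals.

Set Implicit Arguments.
Unset Strict Implicit.
Unset Printing Implicit Defensive.

Import Order.TTheory GRing.Theory Num.Theory.
Local Open Scope ring_scope.

(* An element  p L + q W  of R = C[d]L (+) C[d]W (or of R[lambda], R[mu],    *)
(* R[lambda,mu]) is represented by the pair (p, q) : P * P; elements of R    *)
(* are those pairs whose components only involve 'X_2.                       *)

Section Conformal.
Variable C : fieldType.

Definition P := {mpoly C[3]}.
Definition elt := (P * P)%type.

Definition lam : P := 'X_0.
Definition mu  : P := 'X_1.
Definition dd  : P := 'X_2.

Definition inD (f : {poly C}) : P := (map_poly (fun c : C => c%:MP) f).[dd].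

Definition inR (f g : {poly C}) : elt := (inD f, inD g).

Definition subst3 (t0 t1 t2 : P) (p : P) : P := p \mPo [tuple t0; t1; t2].

Definition in_lam_d (p : P) : Prop := subst3 lam 0 dd p = p.

(* A conformal-algebra product on the free C[d]-module with basis L, W is   *)
(* determined by the four values L_l L, L_l W, W_l L, W_l W in R[lambda];  *)
Record basis_prod := BasisProd { bLL : elt; bLW : elt; bWL : elt; bWW : elt }.

(* The sesquilinear extension: for u = uL L + uW W and v = vL L + vW W whose *)
(* coefficients are polynomials in partial (and possibly in scalar          *)
(* parameters lambda, mu), and nu a scalar parameter,                       *)
(*  u_nu v = sum_{M,N} uM(-nu) vN(d+nu) (M_nu N),                           *)
(* using (d x)_nu y = -nu x_nu y and x_nu (d y) = (d+nu) x_nu y.           *)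
Definition prod (B : basis_prod) (nu : P) (u v : elt) : elt :=
  let sU := subst3 lam mu (- nu) in
  let sV := subst3 lam mu (dd + nu) in
  let sB := subst3 nu mu dd in
  let cLL := sU u.1 * sV v.1 in
  let cLW := sU u.1 * sV v.2 in
  let cWL := sU u.2 * sV v.1 in
  let cWW := sU u.2 * sV v.2 in
  (cLL * sB (bLL B).1 + cLW * sB (bLW B).1 + cWL * sB (bWL B).1 + cWW * sB (bWW B).1,
   cLL * sB (bLL B).2 + cLW * sB (bLW B).2 + cWL * sB (bWL B).2 + cWW * sB (bWW B).2).

Definition eadd (u v : elt) : elt := (u.1 + v.1, u.2 + v.2).
Definition esub (u v : elt) : elt := (u.1 - v.1, u.2 - v.2).

Definition wf_basis_prod (B : basis_prod) : Prop :=
  in_lam_d (bLL B).1 /\ in_lam_d (bLL B).2 /\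
  in_lam_d (bLW B).1 /\ in_lam_d (bLW B).2 /\
  in_lam_d (bWL B).1 /\ in_lam_d (bWL B).2 /\
  in_lam_d (bWW B).1 /\ in_lam_d (bWW B).2.

Definition left_symmetric (B : basis_prod) : Prop :=
  forall x1 x2 y1 y2 z1 z2 : {poly C},
    let x := inR x1 x2 in let y := inR y1 y2 in let z := inR z1 z2 in
    esub (prod B (lam + mu) (prod B lam x y) z) (prod B lam x (prod B mu y z)) =
    esub (prod B (lam + mu) (prod B mu y x) z) (prod B mu y (prod B lam x z)).

Definition prod_opp (B : basis_prod) (y x : elt) : elt :=
  let s := subst3 lam (- lam - dd) dd in
  let w := prod B mu y x in (s w.1, s w.2).

Definition compatible (B Lie : basis_prod) : Prop :=
  forall x1 x2 y1 y2 : {poly C},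
    let x := inR x1 x2 in let y := inR y1 y2 in
    esub (prod B lam x y) (prod_opp B y x) = prod Lie lam x y.

(* The Lie conformal algebra W(a,b):                                        *)
(*  [L_l L] = (d + 2l) L, [L_l W] = (d + a l + b) W, [W_l W] = 0, and       *)
(*  [W_l L] = -[L_{-l-d} W] = ((a-1) d + a l - b) W (skew-symmetry).        *)
Definition W_ab (a b : C) : basis_prod :=
  BasisProd (dd + 2%:R * lam, 0)
            (0, dd + a%:MP * lam + b%:MP)
            (0, (a - 1)%:MP * dd + a%:MP * lam - b%:MP)
            (0, 0).

End Conformal.

(* Main.v *)
Require Import Defs.
From HB Require Import structures.
From mathcomp Require Import all_boot all_order all_algebra.
From mathcomp Require Import mpoly.
From mathcomp Require Import complex.
From mathcomp Require Import reals.
From mathcomp Require Import ring.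
Import Order.TTheory GRing.Theory Num.Theory.
Local Open Scope ring_scope.
Set Implicit Arguments.
Unset Strict Implicit.
Unset Printing Implicit Defensive.


Notation T3 x y z := [tuple x; y; z].

Section Helpers.
Variable C : fieldType.
Local Notation P := (P C).

Lemma mpoly_rmorph_eq n (S : comNzRingType) (f g : {rmorphism {mpoly C[n]} -> S}) :
  (forall c, f c%:MP = g c%:MP) -> (forall i, f 'X_i = g 'X_i) -> forall p, f p = g p.
Proof.
move=> hC hX p; rewrite (mpolyE p) !rmorph_sum; apply: eq_bigr => m _.
rewrite -mul_mpolyC !rmorphM hC mpolyXE_id !rmorph_prod; congr (_ * _).
by apply: eq_bigr => i _; rewrite !rmorphXn hX.
Qed.

Lemma compX0 (x y z : P) : 'X_0 \mPo T3 x y z = x. Proof. by rewrite comp_mpolyXU. Qed.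
Lemma compX1 (x y z : P) : 'X_1 \mPo T3 x y z = y. Proof. by rewrite comp_mpolyXU. Qed.
Lemma compX2 (x y z : P) : 'X_2 \mPo T3 x y z = z. Proof. by rewrite comp_mpolyXU. Qed.

Lemma comp_T3 (p : P) x y z (lr : 3.-tuple P) :
  (p \mPo T3 x y z) \mPo lr = p \mPo T3 (x \mPo lr) (y \mPo lr) (z \mPo lr).
Proof.
pose f := (comp_mpoly lr \o comp_mpoly (T3 x y z)).
have -> : (p \mPo T3 x y z) \mPo lr = f p by [].
apply: (mpoly_rmorph_eq (f := f)) => [c|i].
  by rewrite /f /= !comp_mpolyC.
rewrite /f /= !comp_mpolyXU.
by case: i => [[|[|[|]]] //= _].
Qed.

Fact ev_key : unit. Proof. by []. Qed.
Definition ev (p x y : P) : P := locked_with ev_key (p \mPo T3 x 0 y).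
Lemma evE p x y : ev p x y = p \mPo T3 x 0 y. Proof. by rewrite /ev unlock. Qed.

Lemma wf_ev (p : P) : in_lam_d p -> forall x y z, p \mPo T3 x y z = ev p x z.
Proof.
rewrite /in_lam_d /subst3 => h x y z.
by rewrite evE -{1}h comp_T3 /lam /dd compX0 compX2 comp_mpoly0.
Qed.

Lemma evid (p : P) : in_lam_d p -> ev p 'X_0 'X_2 = p.
Proof. by rewrite /in_lam_d /subst3 evE /lam /dd => ->. Qed.

Lemma ev_comp p x y lr : ev p x y \mPo lr = ev p (x \mPo lr) (y \mPo lr).
Proof. by rewrite !evE comp_T3 comp_mpoly0. Qed.

Lemma inD1 : inD 1 = 1 :> P.
Proof. by rewrite /inD -[1]/(1%:P) map_polyC hornerC. Qed.
Lemma inD0 : inD 0 = 0 :> P.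
Proof. by rewrite /inD map_poly0 horner0. Qed.

Lemma compM (lq : 3.-tuple P) (p q : P) : (p * q) \mPo lq = (p \mPo lq) * (q \mPo lq).
Proof. exact: rmorphM. Qed.
End Helpers.
Lemma compD3 (C : fieldType) (lq : 3.-tuple (P C)) (p q : P C) : (p + q) \mPo lq = (p \mPo lq) + (q \mPo lq).
Proof. exact: comp_mpolyD. Qed.
Lemma compB3 (C : fieldType) (lq : 3.-tuple (P C)) (p q : P C) : (p - q) \mPo lq = (p \mPo lq) - (q \mPo lq).
Proof. exact: comp_mpolyB. Qed.
Lemma compN3 (C : fieldType) (lq : 3.-tuple (P C)) (p : P C) : (- p) \mPo lq = - (p \mPo lq).
Proof. exact: comp_mpolyN. Qed.
Lemma compC3 (C : fieldType) (lq : 3.-tuple (P C)) (c : C) : c%:MP \mPo lq = c%:MP.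
Proof. exact: comp_mpolyC. Qed.
Lemma comp13 (C : fieldType) (lq : 3.-tuple (P C)) : (1 : P C) \mPo lq = 1.
Proof. exact: comp_mpoly1. Qed.
Lemma comp03 (C : fieldType) (lq : 3.-tuple (P C)) : (0 : P C) \mPo lq = 0.
Proof. exact: comp_mpoly0. Qed.
Lemma mul0P (C : fieldType) (x : P C) : 0 * x = 0. Proof. exact: mul0r. Qed.
Lemma mulP0 (C : fieldType) (x : P C) : x * 0 = 0. Proof. exact: mulr0. Qed.
Lemma mul1P (C : fieldType) (x : P C) : 1 * x = x. Proof. exact: mul1r. Qed.
Lemma mulP1 (C : fieldType) (x : P C) : x * 1 = x. Proof. exact: mulr1. Qed.
Lemma add0P (C : fieldType) (x : P C) : 0 + x = x. Proof. exact: add0r. Qed.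
Lemma addP0 (C : fieldType) (x : P C) : x + 0 = x. Proof. exact: addr0. Qed.
Lemma sub0P (C : fieldType) (x : P C) : 0 - x = - x. Proof. exact: sub0r. Qed.
Lemma subP0 (C : fieldType) (x : P C) : x - 0 = x. Proof. exact: subr0. Qed.
Hint Rewrite comp13 comp03 mul0P mulP0 mul1P mulP1 add0P addP0 sub0P subP0 : z3.
Hint Rewrite compD3 compB3 compN3 compM compC3 comp13 comp03 compX0 compX1 compX2 comp_T3 ev_comp : s3.


Ltac simp3 hyps :=
  rewrite /lam /mu /dd ?inD1 ?inD0 /=;
  repeat progress (rewrite ?comp_mpolyD ?comp_mpolyB ?comp_mpolyN ?compM ?comp_mpolyC
    ?comp_mpoly1 ?comp_mpoly0 ?compX0 ?compX1 ?compX2 ?ev_comp ?comp_T3 ?hyps).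


Ltac prep h wG wH wK1 wK2 hLL hg2 hh2 :=
  rewrite /prod_opp /prod /esub /inR /subst3 /W_ab /= in h;
  rewrite ?hLL ?hg2 ?hh2 /= in h;
  try rewrite -(evid wG) in h; try rewrite -(evid wH) in h;
  try rewrite -(evid wK1) in h; try rewrite -(evid wK2) in h;
  rewrite /lam /mu /dd ?inD1 ?inD0 in h;
  autorewrite with z3 in h; autorewrite with s3 in h;
  rewrite ?(wf_ev wG) ?(wf_ev wH) ?(wf_ev wK1) ?(wf_ev wK2) in h.


Lemma eq_sub0 (C : fieldType) (x y z : P C) : x = y -> z = x - y -> z = 0.
Proof. by move=> -> ->; rewrite subrr. Qed.

Section Main.
Variable C : fieldType.
Variables (a c : C) (B : basis_prod C).
Hypothesis hwf : wf_basis_prod B.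
Hypothesis hLS : left_symmetric B.
Hypothesis hcomp : compatible B (W_ab a 0).
Hypothesis hLL : bLL B = (dd _ + lam _ + c%:MP, 0).
Hypothesis hg2 : (bLW B).2 = dd _ + (a - 1)%:MP * lam _ + c%:MP.
Hypothesis hh2 : (bWL B).2 = dd _ + lam _ + c%:MP.

Local Notation G := (bLW B).1.
Local Notation H := (bWL B).1.
Local Notation K1 := (bWW B).1.
Local Notation K2 := (bWW B).2.
Local Notation X0 := ('X_0 : P C).
Local Notation X1 := ('X_1 : P C).
Local Notation X2 := ('X_2 : P C).
Local Notation cP := (c%:MP : P C).
Local Notation bP := ((a - 1)%:MP : P C).

Lemma wfs : in_lam_d G /\ in_lam_d H /\ in_lam_d K1 /\ in_lam_d K2.
Proof. by case: hwf => _ [_ [wG [_ [wH [_ [wK1 wK2]]]]]]. Qed.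

Lemma cLW x y : ev G x y = ev H (-x-y) y.
Proof.
case: wfs => wG [wH [wK1 wK2]].
have h := congr1 fst (hcomp 1 0 0 1).
prep h wG wH wK1 wK2 hLL hg2 hh2.
have h2 : ev G X0 X2 - ev H (- X0 - X2) X2 = 0.
  by apply: (eq_sub0 h); ring.
have := congr1 (comp_mpoly (T3 x 0 y)) h2.
autorewrite with s3 z3.
by move/eqP; rewrite subr_eq0 => /eqP.
Qed.

Lemma cWW1 x y : ev K1 x y = ev K1 (-x-y) y.
Proof.
case: wfs => wG [wH [wK1 wK2]].
have h := congr1 fst (hcomp 0 1 0 1).
prep h wG wH wK1 wK2 hLL hg2 hh2.
have h2 : ev K1 X0 X2 - ev K1 (- X0 - X2) X2 = 0.
  by apply: (eq_sub0 h); ring.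
have := congr1 (comp_mpoly (T3 x 0 y)) h2.
autorewrite with s3 z3.
by move/eqP; rewrite subr_eq0 => /eqP.
Qed.

Lemma cWW2 x y : ev K2 x y = ev K2 (-x-y) y.
Proof.
case: wfs => wG [wH [wK1 wK2]].
have h := congr1 snd (hcomp 0 1 0 1).
prep h wG wH wK1 wK2 hLL hg2 hh2.
have h2 : ev K2 X0 X2 - ev K2 (- X0 - X2) X2 = 0.
  by apply: (eq_sub0 h); ring.
have := congr1 (comp_mpoly (T3 x 0 y)) h2.
autorewrite with s3 z3.
by move/eqP; rewrite subr_eq0 => /eqP.
Qed.

Lemma cD : ev G X0 (X2 + X1) * (X2 + X1 + cP) + (bP * X0 - X1) * ev K2 (X0 + X1) X2
  - ev K2 X1 (X2 + X0) * (X2 + bP * X0 + cP) + (X2 + X1 + bP * X0 + cP) * ev K2 X1 X2 = 0.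
Proof.
case: wfs => wG [wH [wK1 wK2]].
have h := congr1 snd (hLS 1 0 0 1 0 1).
prep h wG wH wK1 wK2 hLL hg2 hh2.
have e : ev H X1 (- (X0 + X1)) = ev G X0 (- (X0 + X1)).
  by rewrite cLW (_ : - X0 - - (X0 + X1) = X1) //; ring.
rewrite e in h.
by apply: (eq_sub0 h); ring.
Qed.

Lemma cW : ev K1 X0 (- (X0 + X1)) * (X2 + bP * (X0 + X1) + cP) +
    ev K2 X0 (- (X0 + X1)) * ev K2 (X0 + X1) X2 -
    (ev K1 X1 (X2 + X0) * (X2 + X0 + cP) + ev K2 X1 (X2 + X0) * ev K2 X0 X2) -
   (ev K1 X1 (- (X0 + X1)) * (X2 + bP * (X0 + X1) + cP) +
    ev K2 X1 (- (X0 + X1)) * ev K2 (X0 + X1) X2 -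
    (ev K1 X0 (X2 + X1) * (X2 + X1 + cP) + ev K2 X0 (X2 + X1) * ev K2 X1 X2)) = 0.
Proof.
case: wfs => wG [wH [wK1 wK2]].
have h := congr1 snd (hLS 0 1 0 1 0 1).
prep h wG wH wK1 wK2 hLL hg2 hh2.
by apply: (eq_sub0 h); ring.
Qed.

End Main.



Lemma per_poly (R : idomainType) (a : R) (q : {poly R}) :
  (forall n, (n.+1)%:R != 0 :> R) -> a != 0 ->
  q \Po ('X + a%:P) = q -> q = (q`_0)%:P.
Proof.
move=> hc a0.
elim: (size q) {-2}q (leqnn (size q)) => [|n IH] {}q hs hq.
  by apply: size1_polyC; apply: leq_trans hs _.
have hd : q^`() \Po ('X + a%:P) = q^`().
  have := deriv_comp q ('X + a%:P).
  by rewrite hq derivD derivX derivC addr0 mulr1 => <-.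
have sd : (size q^`() <= n)%N.
  have [->|q0] := eqVneq q 0; first by rewrite deriv0 size_poly0.
  by rewrite -ltnS; apply: leq_trans (lt_size_deriv q0) hs.
have {}IH := IH _ sd hd.
have hq2 : forall j, (2 <= j)%N -> q`_j = 0.
  move=> [|[|j]] // _.
  have : q^`()`_j.+1 = 0 by rewrite IH coefC.
  rewrite coef_deriv => /eqP; rewrite -mulr_natr mulf_eq0 => /orP[/eqP //|].
  by move=> /negPn; rewrite hc.
have qE : q = (q`_0)%:P + q`_1 *: 'X.
  apply/polyP => j; rewrite coefD coefC coefZ coefX.
  case: j => [|[|j]] /=; first by rewrite mulr0 addr0.
    by rewrite add0r mulr1.
  by rewrite hq2 // add0r mulr0.
have h1 : q \Po ('X + a%:P) = (q`_0)%:P + q`_1 *: ('X + a%:P).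
  by rewrite {1}qE comp_polyD comp_polyC comp_polyZ comp_polyX.
have := congr1 (fun p : {poly R} => p`_0) (etrans (esym h1) hq).
rewrite /= coefD coefZ coefD coefX !coefC /= add0r => /eqP.
rewrite -subr_eq0 addrC addKr mulf_eq0 (negbTE a0) orbF => /eqP q10.
by rewrite qE q10 scale0r addr0 coefC.
Qed.



Section Per3.
Variable C : fieldType.
Hypothesis hc : forall n, (n.+1)%:R != 0 :> C.

Lemma muniX0 : muni ('X_0 : {mpoly C[3]}) = ('X_0)%:P.
Proof.
rewrite /muni mmapX mmap1U /=; case: splitP => [j hj|k hk] //=.
by congr ('X__)%:P; apply: val_inj; rewrite /= -hj.
Qed.
Lemma muniX1 : muni ('X_1 : {mpoly C[3]}) = ('X_1)%:P.
Proof.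
rewrite /muni mmapX mmap1U /=; case: splitP => [j hj|k hk] //=.
by congr ('X__)%:P; apply: val_inj; rewrite /= -hj.
Qed.
Lemma muniX2 : muni ('X_2 : {mpoly C[3]}) = 'X.
Proof.
rewrite /muni mmapX mmap1U /=; case: splitP => [j hj|k hk] //=.
by move: (ltn_ord j); rewrite -hj.
Qed.

Definition back (r : {poly {mpoly C[2]}}) : {mpoly C[3]} :=
  horner_eval ('X_2 : {mpoly C[3]}) (map_poly (@mwiden 2 C) r).

Lemma backK (p : {mpoly C[3]}) : back (muni p) = p.
Proof.
pose f := (horner_eval ('X_2 : {mpoly C[3]})) \o (map_poly (@mwiden 2 C)) \o (@muni 2 C).
pose g := (@idfun {mpoly C[3]}).
have -> : back (muni p) = f p by [].
have -> : p = g p by [].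
apply: (mpoly_rmorph_eq (f := f) (g := g)) => [c0|i].
  by rewrite /f /g /= muniC map_polyC /= mwidenC /horner_eval hornerC.
rewrite /f /g /=.
case: i => [[|[|[|]]] //= hi].
- have -> : (Ordinal hi) = 0 by apply: val_inj.
  by rewrite muniX0 map_polyC /horner_eval hornerC /= mwidenX mnmwiden1.
- have -> : (Ordinal hi) = 1 by apply: val_inj.
  by rewrite muniX1 map_polyC /horner_eval hornerC /= mwidenX mnmwiden1.
- have -> : (Ordinal hi) = 2 by apply: val_inj.
  by rewrite muniX2 map_polyX /horner_eval hornerX.
Qed.

Lemma muni_inj : injective (@muni 2 C).
Proof. by move=> p q h; rewrite -(backK p) -(backK q) h. Qed.


Lemma per3 (c : C) (p : {mpoly C[3]}) :
  p \mPo T3 'X_0 'X_1 ('X_2 + (c%:MP - 'X_0)) = p -> p \mPo T3 'X_0 'X_1 0 = p.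
Proof.
move=> hp.
have m1 : forall r, muni (r \mPo T3 'X_0 'X_1 ('X_2 + (c%:MP - 'X_0))) =
    (muni r) \Po ('X + (c%:MP - 'X_0)%:P).
  pose f := (@muni 2 C) \o comp_mpoly (T3 'X_0 'X_1 ('X_2 + (c%:MP - 'X_0))).
  pose g := (comp_poly ('X + (c%:MP - 'X_0 : {mpoly C[2]})%:P)) \o (@muni 2 C).
  move=> r; have -> : muni (r \mPo T3 'X_0 'X_1 ('X_2 + (c%:MP - 'X_0))) = f r by [].
  have -> : (muni r) \Po ('X + (c%:MP - 'X_0)%:P) = g r by [].
  apply: (mpoly_rmorph_eq (f := f) (g := g)) => [c0|i].
    by rewrite /f /g /= comp_mpolyC muniC comp_polyC.
  rewrite /f /g /=.
  case: i => [[|[|[|]]] //= hi].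
  - have -> : (Ordinal hi) = 0 by apply: val_inj.
    by rewrite compX0 muniX0 comp_polyC.
  - have -> : (Ordinal hi) = 1 by apply: val_inj.
    by rewrite compX1 muniX1 comp_polyC.
  - have -> : (Ordinal hi) = 2 by apply: val_inj.
    by rewrite compX2 muniX2 comp_polyX rmorphD rmorphB /= muniX2 muniC muniX0 polyCB.
have m2 : forall r : {mpoly C[3]}, muni (r \mPo T3 'X_0 'X_1 0) = (muni r) \Po 0.
  pose f := (@muni 2 C) \o comp_mpoly (T3 'X_0 'X_1 (0 : {mpoly C[3]})).
  pose g := (comp_poly (0 : {poly {mpoly C[2]}})) \o (@muni 2 C).
  move=> r; have -> : muni (r \mPo T3 'X_0 'X_1 0) = f r by [].
  have -> : (muni r) \Po 0 = g r by [].
  apply: (mpoly_rmorph_eq (f := f) (g := g)) => [c0|i].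
    by rewrite /f /g /= comp_mpolyC muniC comp_polyC.
  rewrite /f /g /=.
  case: i => [[|[|[|]]] //= hi].
  - have -> : (Ordinal hi) = 0 by apply: val_inj.
    by rewrite compX0 muniX0 comp_polyC.
  - have -> : (Ordinal hi) = 1 by apply: val_inj.
    by rewrite compX1 muniX1 comp_polyC.
  - have -> : (Ordinal hi) = 2 by apply: val_inj.
    by rewrite compX2 muniX2 comp_polyX rmorph0.
have hc' : forall n, (n.+1)%:R != 0 :> {mpoly C[2]}.
  by move=> n; rewrite -(rmorph_nat (@mpolyC 2 C)) mpolyC_eq0 hc.
have a0 : (c%:MP - 'X_0 : {mpoly C[2]}) != 0.
  apply/negP => /eqP h.
  have := congr1 (meval (fun _ => c - 1)) h.
  rewrite mevalB mevalC mevalXU meval0 (_ : c - (c - 1) = 1); last by ring.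
  by move/eqP; rewrite oner_eq0.
have hq := per_poly hc' a0 (etrans (esym (m1 p)) (congr1 (@muni 2 C) hp)).
apply: muni_inj; rewrite m2 -polyC0 comp_polyCr horner_coef0.
by rewrite {2}hq.
Qed.

End Per3.



Lemma ev_congr (C : fieldType) (p x y x' y' : P C) : x = x' -> y = y' -> ev p x y = ev p x' y'.
Proof. by move=> -> ->. Qed.

Lemma comp000 (C : fieldType) (p : P C) : p \mPo T3 (0 : P C) 0 0 = (meval (fun _ => 0) p)%:MP.
Proof.
pose f := comp_mpoly (T3 (0 : P C) 0 0).
pose g := (@mpolyC 3 C) \o (meval (fun _ : 'I_3 => (0 : C))).
have -> : p \mPo T3 (0 : P C) 0 0 = f p by [].
have -> : (meval (fun _ => 0) p)%:MP = g p by [].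
apply: (mpoly_rmorph_eq (f := f) (g := g)) => [c0|i].
  by rewrite /f /g /= comp_mpolyC mevalC.
rewrite /f /g /= mevalXU comp_mpolyXU.
by case: i => [[|[|[|]]] //= hi].
Qed.

Lemma evC (C : fieldType) (k : C) (x y : P C) : ev k%:MP x y = k%:MP.
Proof. by rewrite evE comp_mpolyC. Qed.
Lemma ev0 (C : fieldType) (x y : P C) : ev 0 x y = 0.
Proof. by rewrite evE comp_mpoly0. Qed.

Section Main2.
Variable C : fieldType.
Hypothesis hchar : forall n, (n.+1)%:R != 0 :> C.
Variables (a c : C) (B : basis_prod C).
Hypothesis hwf : wf_basis_prod B.
Hypothesis hLS : left_symmetric B.
Hypothesis hcomp : compatible B (W_ab a 0).
Hypothesis hLL : bLL B = (dd _ + lam _ + c%:MP, 0).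
Hypothesis hg2 : (bLW B).2 = dd _ + (a - 1)%:MP * lam _ + c%:MP.
Hypothesis hh2 : (bWL B).2 = dd _ + lam _ + c%:MP.

Local Notation G := (bLW B).1.
Local Notation H := (bWL B).1.
Local Notation K1 := (bWW B).1.
Local Notation K2 := (bWW B).2.
Local Notation X0 := ('X_0 : P C).
Local Notation X1 := ('X_1 : P C).
Local Notation X2 := ('X_2 : P C).
Local Notation cP := (c%:MP : P C).
Local Notation bP := ((a - 1)%:MP : P C).

Lemma R3 : (bP * (cP - X0) + cP + X2) * (ev K2 X0 X2 - ev K2 X0 (X2 + (cP - X0)))
   + bP * (cP - X0) * ev K2 cP X2 = 0.
Proof.
have h := congr1 (comp_mpoly (T3 (cP - X0) (-cP - X2) X2)) (cD hwf hLS hcomp hLL hg2 hh2).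
autorewrite with s3 z3 in h.
have EK2 := cWW2 hwf hcomp hLL hg2 hh2.
have e1 : ev K2 (cP - X0 + (- cP - X2)) X2 = ev K2 X0 X2 by rewrite EK2; apply: ev_congr; ring.
have e2 : ev K2 (- cP - X2) (X2 + (cP - X0)) = ev K2 X0 (X2 + (cP - X0)).
  by rewrite EK2; apply: ev_congr; ring.
have e3 : ev K2 (- cP - X2) X2 = ev K2 cP X2 by rewrite EK2; apply: ev_congr; ring.
rewrite e1 e2 e3 in h.
by apply: (eq_sub0 h); ring.
Qed.

Lemma X0c_neq0 : cP - X0 != 0.
Proof.
apply/negP => /eqP h.
have := congr1 (comp_mpoly (T3 (cP - 1) 0 0)) h.
autorewrite with s3 z3.
rewrite (_ : cP - (cP - 1) = 1); last by ring.
by move/eqP; rewrite oner_eq0.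
Qed.

Lemma Kc : a != 1 -> ev K2 cP X2 = 0.
Proof.
move=> ha.
have hb : bP != 0 by rewrite mpolyC_eq0 subr_eq0.
have h := congr1 (comp_mpoly (T3 X0 X1 (- cP - bP * (cP - X0)))) R3.
autorewrite with s3 z3 in h.
have h' : bP * (cP - X0) * ev K2 cP (- cP - bP * (cP - X0)) = 0.
  by apply: (eq_sub0 h); ring.
move: h' => /eqP; rewrite mulf_eq0 mulf_eq0 (negbTE hb) (negbTE X0c_neq0) /= => /eqP h2.
pose bIP : P C := (a - 1)^-1%:MP.
have hbi : bP * bIP = 1.
  by rewrite -mpolyCM mulfV ?subr_eq0.
have := congr1 (comp_mpoly (T3 (cP + (X2 + cP) * bIP) X1 X2)) h2.
autorewrite with s3 z3.
have -> : - cP - bP * (cP - (cP + (X2 + cP) * bIP)) = X2.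
  transitivity (- cP + (bP * bIP) * (X2 + cP)); first by ring.
  by rewrite hbi; ring.
by [].
Qed.

Lemma Kper : ev K2 X0 X2 = ev K2 X0 (X2 + (cP - X0)).
Proof.
have f0 : bP * (cP - X0) + cP + X2 != 0.
  apply/negP => /eqP h.
  have := congr1 (comp_mpoly (T3 cP 0 (1 - cP))) h.
  autorewrite with s3 z3.
  rewrite (_ : bP * (cP - cP) + cP + (1 - cP) = 1); last by ring.
  by move/eqP; rewrite oner_eq0.
have hz : bP * (cP - X0) * ev K2 cP X2 = 0.
  case: (eqVneq a 1) => [->|a1]; first by rewrite subrr mul0r mul0r.
  by rewrite Kc // mulr0.
have := R3; rewrite hz addr0 => /eqP; rewrite mulf_eq0 (negbTE f0) /= subr_eq0.
by move/eqP.
Qed.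


Lemma Kconst : K2 = (meval (fun _ => 0) K2)%:MP.
Proof.
case: (wfs hwf) => wG [wH [wK1 wK2]].
have EK2 := cWW2 hwf hcomp hLL hg2 hh2.
have hp : K2 \mPo T3 X0 X1 (X2 + (cP - X0)) = K2.
  by rewrite (wf_ev wK2) -Kper evid.
have h0 := per3 hchar hp.
rewrite (wf_ev wK2) in h0.
have hx : forall x y, ev K2 x 0 = ev K2 x y.
  move=> x y.
  have := congr1 (comp_mpoly (T3 x 0 y)) (etrans h0 (esym (evid wK2))).
  by autorewrite with s3 z3.
have h1 : ev K2 X0 0 = ev K2 (- X0 - X2) 0.
  by rewrite h0 -{1}(evid wK2) EK2 (hx _ X2).
have := congr1 (comp_mpoly (T3 0 0 (- X0))) h1.
autorewrite with s3 z3.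
rewrite (_ : - 0 - - X0 = X0); last by ring.
rewrite h0 evE comp000 => ->.
by [].
Qed.

Lemma nz_X2c : X2 + cP != 0.
Proof.
apply/negP => /eqP h.
have := congr1 (comp_mpoly (T3 0 0 (1 - cP))) h.
autorewrite with s3 z3.
rewrite (_ : 1 - cP + cP = 1); last by ring.
by move/eqP; rewrite oner_eq0.
Qed.

Lemma nz_X20c : X2 + X0 + cP != 0.
Proof.
apply/negP => /eqP h.
have := congr1 (comp_mpoly (T3 0 0 (1 - cP))) h.
autorewrite with s3 z3.
rewrite (_ : 1 - cP + cP = 1); last by ring.
by move/eqP; rewrite oner_eq0.
Qed.

Lemma kb : bP * (meval (fun _ => 0) K2)%:MP = 0.
Proof.
case: (eqVneq a 1) => [->|a1]; first by rewrite subrr mul0r.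
have h := Kc a1.
rewrite Kconst evC in h.
by rewrite h mulr0.
Qed.

Lemma G0 : G = 0.
Proof.
case: (wfs hwf) => wG [wH [wK1 wK2]].
have h := cD hwf hLS hcomp hLL hg2 hh2.
rewrite Kconst !evC in h.
have := congr1 (comp_mpoly (T3 X0 0 X2)) h.
autorewrite with s3 z3.
rewrite evid // => h2.
have h3 : G * (X2 + cP) = 0.
  apply: (eq_sub0 h2).
  transitivity (G * (X2 + cP) + (bP * (meval (fun _ => 0) K2)%:MP) * X0); last by ring.
  by rewrite kb mul0r addr0.
by move: h3 => /eqP; rewrite mulf_eq0 (negbTE nz_X2c) orbF => /eqP.
Qed.

Lemma H0 : H = 0.
Proof.
case: (wfs hwf) => wG [wH [wK1 wK2]].
have h := cLW hwf hcomp hLL (- X0 - X2) X2.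
rewrite G0 ev0 (_ : - (- X0 - X2) - X2 = X0) in h; last by ring.
by rewrite -(evid wH) h.
Qed.

Lemma K10 : K1 = 0.
Proof.
case: (wfs hwf) => wG [wH [wK1 wK2]].
have h := cW hwf hLS hLL hg2 hh2.
have EK1 := cWW1 hwf hcomp hLL.
have e : ev K1 X0 (- (X0 + X1)) = ev K1 X1 (- (X0 + X1)).
  by rewrite EK1; apply: ev_congr; ring.
rewrite Kconst !evC e in h.
have h2 : ev K1 X0 (X2 + X1) * (X2 + X1 + cP) - ev K1 X1 (X2 + X0) * (X2 + X0 + cP) = 0.
  by apply: (eq_sub0 h); ring.
have := congr1 (comp_mpoly (T3 X0 (- cP - X2) X2)) h2.
autorewrite with s3 z3 => h3.
have h4 : ev K1 (- cP - X2) (X2 + X0) * (X2 + X0 + cP) = 0.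
  by apply/eqP; rewrite -oppr_eq0; apply/eqP; apply: (eq_sub0 h3); ring.
move: h4 => /eqP; rewrite mulf_eq0 (negbTE nz_X20c) orbF => /eqP h5.
have := congr1 (comp_mpoly (T3 (X2 + cP + X0) X1 (- cP - X0))) h5.
autorewrite with s3 z3.
rewrite (_ : - cP - (- cP - X0) = X0); last by ring.
rewrite (_ : - cP - X0 + (X2 + cP + X0) = X2); last by ring.
by rewrite evid.
Qed.

End Main2.

Local Open Scope complex_scope.

Theorem lemma3p6 (R : realType) (a c : R[i]) (B : basis_prod R[i]) :
  wf_basis_prod B ->
  left_symmetric B ->
  compatible B (W_ab a 0) ->
  (* C[d]L is a left-symmetric conformal subalgebra, with L_l L = (d+l+c)L *)
  (bLL B).2 = 0 ->
  bLL B = (dd _ + lam _ + c%:MP, 0) ->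
  (* g2 = d + (a-1) l + c  and  h2 = d + l + c *)
  (bLW B).2 = dd _ + (a - 1)%:MP * lam _ + c%:MP ->
  (bWL B).2 = dd _ + lam _ + c%:MP ->
  ((bWL B).1 = 0 /\ (bLW B).1 = 0 /\ (bWW B).1 = 0 /\ (bWW B).2 = 0)
  \/
  (a = 1 /\ (bWL B).1 = 0 /\ (bLW B).1 = 0 /\ (bWW B).1 = 0 /\
   exists k : R[i], k != 0 /\ (bWW B).2 = k%:MP).
Proof.
move=> hwf hLS hcomp _ hLL hg2 hh2.
have hchar : forall n, (n.+1)%:R != 0 :> R[i] by move=> n; rewrite pnatr_eq0.
have hG := G0 hchar hwf hLS hcomp hLL hg2 hh2.
have hH := H0 hchar hwf hLS hcomp hLL hg2 hh2.
have hK1 := K10 hchar hwf hLS hcomp hLL hg2 hh2.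
have hK := Kconst hchar hwf hLS hcomp hLL hg2 hh2.
have hkb := kb hchar hwf hLS hcomp hLL hg2 hh2.
move: hK hkb; set k0 := meval _ _ => hK hkb.
case: (eqVneq a 1) => [a1|a1].
  case: (eqVneq k0 0) => [k00|k00].
    by left; rewrite hK k00 mpolyC0.
  by right; split => //; split => //; split => //; split => //; exists k0.
left; split => //; split => //; split => //.
move: hkb => /eqP; rewrite mulf_eq0 mpolyC_eq0 subr_eq0 (negbTE a1) /= => /eqP hk.
by rewrite hK hk.
Qed.
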